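(* Let $G$ be a strongly connected signed digraph on $[n]$ without positive cycles, which is not a cycle. If $\tau(G)\le 1$, then there is a word $w$ of length $3n-1$ which synchronizes every and-or-net on $G$.
   Context: A signed digraph on $V$ is $(V,E)$ with $E\subseteq V\times V\times\{-1,1\}$ (loops allowed). Cycles have no repeated vertices (a loop is a cycle); the sign of a cycle is the product of its arc signs; ''$G$ is a cycle'' means $G$ itself is a single cycle. $\tau(G)$ is the minimum size of a feedback vertex set of $G$ (a set of vertices meeting every cycle). A Boolean network (BN) is $f:\{0,1\}^V\to\{0,1\}^V$; its signed interaction digraph has a positive (negative) arc from $j$ to $i$ iff for some $x$ with $x_j=0$, $f_i(x+e_j)-f_i(x)$ is positive (negative). An and-or-net on $G$ is a BN whose signed interaction digraph is $G$ and each $f_i$ is a conjunction ($f_i(x)=1$ iff $x_j=1$ for all positive and $x_j=0$ for all negative in-neighbors $j$ of $i$) or a disjunction ($f_i(x)=0$ iff $x_j=0$ for all positive and $x_j=1$ for all negative in-neighbors). $f^i(x)$ is $x$ with $x_i$ replaced by $f_i(x)$; $f^{i_1\cdots i_\ell}=f^{i_\ell}\circ\cdots\circ f^{i_1}$; $w$ synchronizes $f$ if $f^w$ is constant. *)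

(* Defs.v *)
From mathcomp Require Import all_boot all_order all_algebra.
From Stdlib Require Import ClassicalEpsilon.
Set Implicit Arguments. Unset Strict Implicit. Unset Printing Implicit Defensive.
Import GRing.Theory.

(* Vertex set [n] = 'I_n.  An arc (j, i, s) goes from j to i with sign s,
   where the boolean s encodes the sign: true = +1, false = -1. *)
Definition arc n := ('I_n * 'I_n * bool)%type.
Definition signed_digraph n := {set arc n}.

Definition arc_src n (a : arc n) : 'I_n := a.1.1.
Definition arc_tgt n (a : arc n) : 'I_n := a.1.2.
Definition arc_sign n (a : arc n) : int := if a.2 then 1%R else (-1)%R.

Definition is_cyc n (G : signed_digraph n) (c : seq (arc n)) : bool :=
  [&& c != [::], all (fun a => a \in G) c,
      cycle (fun a b => arc_tgt a == arc_src b) c & uniq (map (@arc_src n) c)].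

Definition cyc_sign n (c : seq (arc n)) : int := \prod_(a <- c) arc_sign a.

Definition no_positive_cycle n (G : signed_digraph n) : Prop :=
  forall c, is_cyc G c -> cyc_sign c <> 1%R.

Definition is_cycle_digraph n (G : signed_digraph n) : Prop :=
  exists c, [/\ is_cyc G c, (forall a, (a \in G) = (a \in c))
              & forall v : 'I_n, v \in map (@arc_src n) c].

Definition adj n (G : signed_digraph n) : rel 'I_n :=
  fun u v => [exists s : bool, (u, v, s) \in G].

Definition strongly_connected n (G : signed_digraph n) : Prop :=
  forall u v : 'I_n, connect (adj G) u v.

Definition fvs n (G : signed_digraph n) (X : {set 'I_n}) : Prop :=
  forall c, is_cyc G c -> has (fun a => arc_src a \in X) c.

Definition tau_pred n (G : signed_digraph n) : pred nat :=
  fun k => if excluded_middle_informative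
                (exists X : {set 'I_n}, #|X| = k /\ fvs G X) then true else false.

Lemma tau_pred_ex n (G : signed_digraph n) : exists k, tau_pred G k.
Proof.
exists #|[set: 'I_n]|; rewrite /tau_pred.
case: excluded_middle_informative => // [[]].
exists [set: 'I_n]; split => // c /and4P [+ _ _ _].
by case: c => // a c _ /=; rewrite in_setT.
Qed.

Definition tau n (G : signed_digraph n) : nat := ex_minn (tau_pred_ex G).

Definition state n := {ffun 'I_n -> bool}.
Definition BN n := state n -> state n.

Definition setc n (x : state n) (j : 'I_n) (b : bool) : state n :=
  [ffun k => if k == j then b else x k].

Definition interaction_digraph n (f : BN n) : signed_digraph n :=
  [set a : arc n | [exists x : state n,
     [&& ~~ x (arc_src a),
         f x (arc_tgt a) == ~~ a.2 &
         f (setc x (arc_src a) true) (arc_tgt a) == a.2]]].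

Definition is_conjunction_at n (G : signed_digraph n) (f : BN n) (i : 'I_n) :=
  forall x : state n, f x i =
    [forall j : 'I_n, (((j, i, true) \in G) ==> x j) &&
                      (((j, i, false) \in G) ==> ~~ x j)].

Definition is_disjunction_at n (G : signed_digraph n) (f : BN n) (i : 'I_n) :=
  forall x : state n, f x i =
    ~~ [forall j : 'I_n, (((j, i, true) \in G) ==> ~~ x j) &&
                         (((j, i, false) \in G) ==> x j)].

Definition and_or_net n (G : signed_digraph n) (f : BN n) : Prop :=
  interaction_digraph f = G /\
  forall i, is_conjunction_at G f i \/ is_disjunction_at G f i.

(* asynchronous update f^i and words f^w (first letter applied first) *)
Definition upd n (f : BN n) (i : 'I_n) (x : state n) : state n := setc x i (f x i).
Definition upd_word n (f : BN n) (w : seq 'I_n) (x : state n) : state n :=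
  foldl (fun y i => upd f i y) x w.

Definition synchronizes n (w : seq 'I_n) (f : BN n) : Prop :=
  exists y : state n, forall x, upd_word f w x = y.

(* Main.v *)
Require Import Defs.
From mathcomp Require Import all_boot all_order all_algebra.
From mathcomp Require Import zify.
From Stdlib Require Import ClassicalEpsilon.
Set Implicit Arguments. Unset Strict Implicit. Unset Printing Implicit Defensive.
Import GRing.Theory.

Section Basic.
Variables (n : nat) (G : signed_digraph n).

Definition sg (x y : 'I_n) : bool := (x, y, true) \in G.

Lemma adj_sg x y : adj G x y -> (x, y, sg x y) \in G.
Proof.
rewrite /adj /sg => /existsP [s Hs].
case E: ((x, y, true) \in G) => //.
by case: s Hs E => // ->.
Qed.

Lemma arc_adj x y s : (x, y, s) \in G -> adj G x y.
Proof. by move=> H; apply/existsP; exists s. Qed.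

Fixpoint parcs (x : 'I_n) (s : seq 'I_n) : seq (Defs.arc n) :=
  if s is y :: s' then (x, y, sg x y) :: parcs y s' else [::].
Fixpoint ppar (x : 'I_n) (s : seq 'I_n) : bool :=
  if s is y :: s' then (~~ sg x y) (+) ppar y s' else false.

Definition bsign (b : bool) : int := if b then (-1)%R else 1%R.

Lemma bsignD a b : bsign (a (+) b) = (bsign a * bsign b)%R.
Proof. by case: a; case: b. Qed.

Lemma prod_parcs x s : (\prod_(a <- parcs x s) arc_sign a)%R = bsign (ppar x s).
Proof.
elim: s x => [|y s IH] x /=; first by rewrite big_nil.
rewrite big_cons IH bsignD /arc_sign /=; by case: (sg x y).
Qed.

Lemma ppar_cat x s1 s2 : ppar x (s1 ++ s2) = ppar x s1 (+) ppar (last x s1) s2.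
Proof. by elim: s1 x => [|y s IH] x //=; rewrite IH addbA. Qed.

Lemma map_src_parcs x s : map (@arc_src n) (parcs x s) = belast x s.
Proof. by elim: s x => [|y s IH] x //=; rewrite IH. Qed.

Lemma all_parcs x s : path (adj G) x s -> all (fun a => a \in G) (parcs x s).
Proof.
elim: s x => [|y s IH] x //= /andP [H1 H2]; rewrite adj_sg //=; exact: IH.
Qed.

Lemma path_parcs x s z b' y b :
  path (fun a c => arc_tgt a == arc_src c) (z, x, b') (parcs x s ++ [:: (last x s, y, b)]).
Proof.
elim: s x z b' => [|y1 s IH] x z b' /=; first by rewrite /arc_tgt /arc_src /= eqxx.
by rewrite /arc_tgt /arc_src /= eqxx /=; apply: IH.
Qed.

Lemma cyc_build x s b : path (adj G) x s -> uniq (x :: s) -> (last x s, x, b) \in G ->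
  [/\ is_cyc G (parcs x s ++ [:: (last x s, x, b)]),
      map (@arc_src n) (parcs x s ++ [:: (last x s, x, b)]) = x :: s &
      cyc_sign (parcs x s ++ [:: (last x s, x, b)]) = bsign (ppar x s (+) ~~ b)].
Proof.
move=> Hp Hu Hb.
have Hm : map (@arc_src n) (parcs x s ++ [:: (last x s, x, b)]) = x :: s.
  by rewrite map_cat map_src_parcs /= cats1 -lastI.
split => //.
  apply/and4P; split.
  - by case: (parcs x s).
  - by rewrite all_cat all_parcs //= Hb.
  - rewrite (cycle_path (last x s, x, b)) last_cat /=.
    exact: path_parcs.
  - by rewrite Hm.
rewrite /cyc_sign big_cat /= prod_parcs big_seq1 bsignD /arc_sign /=.
by case: b {Hb Hm}.
Qed.

End Basic.

Section Graph.
Variables (n : nat) (G : signed_digraph n) (v : 'I_n).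
Hypothesis Hsc : strongly_connected G.
Hypothesis Hnp : no_positive_cycle G.
Hypothesis Hfv : fvs G [set v].

Definition e : rel 'I_n := fun x y => [&& adj G x y, x != v & y != v].

Lemma neg_cycle c : is_cyc G c -> forall b, cyc_sign c = bsign b -> b.
Proof. by move=> Hc [] // H; have := Hnp Hc; rewrite H. Qed.

Lemma path_e_nv x s : path e x s -> all (fun z => z != v) s.
Proof.
elim: s x => [|y s IH] x //= /andP [/and3P [_ _ ->] H] /=; exact: IH H.
Qed.

Lemma path_e_adj x s : path e x s -> path (adj G) x s.
Proof. by apply: sub_path => a b /and3P []. Qed.

Lemma adj_e x s : path (adj G) x s -> all (fun z => z != v) (x :: s) -> path e x s.
Proof.
elim: s x => [|y s IH] x //= /andP [H1 H2] /and3P [Hx Hy Hs].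
by rewrite /e H1 Hx Hy /=; apply: IH => //=; rewrite Hy.
Qed.

Lemma NoDcyc x y : e x y -> connect e y x -> False.
Proof.
move=> Hxy /connectP [p Hp Hl].
case/shortenP: Hp Hl => p' Hp' Hu _ Hl.
have Ha : (last y p', y, sg G (last y p') y) \in G.
  by rewrite -Hl; apply: adj_sg; case/and3P: Hxy.
have [Hc Hm _] := cyc_build (path_e_adj Hp') Hu Ha.
move: (Hfv Hc) => H.
have : has (fun z => z \in [set v]) (map (@arc_src n) (parcs G y p' ++ [:: (last y p', y, sg G (last y p') y)])) by rewrite has_map.
rewrite Hm /= in_set1; case/orP.
  by case/and3P: Hxy => _ _ /negbTE ->.
move/hasP => [z Hz]; rewrite in_set1 => /eqP Hzv.
by have := allP (path_e_nv Hp') z Hz; rewrite Hzv eqxx.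
Qed.

Lemma connect_antisym x y : connect e x y -> connect e y x -> x = y.
Proof.
case/connectP => [[|z p]] /=; first by move=> _ ->.
case/andP => Hxz Hp Hl Hyx; exfalso; apply: (NoDcyc Hxz).
apply: connect_trans Hyx; rewrite Hl; apply: (path_connect Hp); exact: mem_last.
Qed.

Lemma epath_uniq x s : path e x s -> uniq (x :: s).
Proof.
elim: s x => [|y s IH] x //= /andP [Hxy Hp].
have := IH _ Hp => /= ->; rewrite andbT.
apply/negP => Hx; apply: (NoDcyc Hxy); exact: (path_connect Hp).
Qed.

Lemma epath_conn_last x s y : path e x s -> y \in x :: s -> connect e y (last x s).
Proof.
elim: s x y => [|z s IH] x y /=.
  by move=> _; rewrite inE => /eqP ->; exact: connect0.
case/andP => Hxz Hp; rewrite inE => /orP [/eqP ->|Hy].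
  apply: connect_trans (connect1 Hxz) _; apply: IH => //; exact: mem_head.
exact: IH.
Qed.

Lemma connect_from_v y : connect e v y -> y = v.
Proof.
case/connectP => [[|z p]] /=; first by move=> _ ->.
by case/andP => /and3P [_ /eqP].
Qed.

Lemma connect_last_step (r : rel 'I_n) t u : connect r t u -> t != u -> exists j, r j u.
Proof.
case/connectP => p; case/lastP: p => [|p y] /=; first by move=> _ ->; rewrite eqxx.
rewrite rcons_path last_rcons => /andP [_ H] -> _; by exists (last t p).
Qed.

Definition Dpath (u : 'I_n) : pred (seq 'I_n) :=
  fun p => [&& path (adj G) v p, last v p == u & all (fun z => z != v) p].

Lemma Dpath_prop u p : Dpath u p -> uniq (v :: p) /\ forall z, z \in p -> connect e z u.
Proof.
case/and3P => Hp /eqP Hl Ha.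
case: p Hp Hl Ha => [|z p] /=; first by move=> _ _ _; split.
case/andP => Hvz Hp Hl /andP [Hz Ha].
have He : path e z p by apply: adj_e => //=; rewrite Hz.
have Ha' : all (fun t => t != v) (z :: p) by rewrite /= Hz.
have Hu : uniq (v :: z :: p).
  rewrite cons_uniq (epath_uniq He) andbT; apply/negP => /(allP Ha'); by rewrite eqxx.
split; first exact: Hu.
by move=> y Hy; rewrite -Hl; apply: epath_conn_last.
Qed.

Lemma Dpath_v p : Dpath v p -> p = [::].
Proof.
case/and3P => _ /eqP Hl Ha; case: p Hl Ha => [|z p] //= Hl /andP [Hz Ha].
have := mem_last z p; rewrite Hl inE eq_sym (negbTE Hz) /= => H.
by have := allP Ha _ H; rewrite eqxx.
Qed.

Lemma Dpath_ex u : exists p, Dpath u p.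
Proof.
have [->|Huv] := eqVneq u v; first by exists [::]; rewrite /Dpath /= eqxx.
case/connectP: (Hsc v u) => p Hp Hl.
case/shortenP: Hp Hl => p' Hp' Hu _ Hl; exists p'.
rewrite /Dpath Hp' -Hl eqxx /=; apply/allP => z Hz.
by apply/negP => /eqP Hzv; move: Hu; rewrite /= -Hzv Hz.
Qed.

Lemma K1 u p1 p2 : Dpath u p1 -> Dpath u p2 -> ppar G v p1 = ppar G v p2.
Proof.
have [->|Huv] := eqVneq u v; first by move=> /Dpath_v -> /Dpath_v ->.
case/connectP: (Hsc u v) => q0 Hq0 Hl0.
case/shortenP: Hq0 Hl0 => q Hq Hqu _ Hl.
case/lastP: q Hq Hqu Hl => [|q y]; first by move=> _ _ /= Hl; rewrite Hl eqxx in Huv.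
rewrite last_rcons => + + Hy; rewrite -{}Hy => Hq Hqu.
move: Hq; rewrite rcons_path => /andP [Hq Hqv].
move: Hqu; rewrite /= mem_rcons inE negb_or rcons_uniq => /andP [/andP [_ Huq] /andP [Hvq Huq']].
have key : forall p, Dpath u p -> ppar G v p (+) ppar G u q (+) ~~ sg G (last u q) v.
  move=> p Hp; have [Hpu Hpc] := Dpath_prop Hp.
  move: (Hp) => /and3P [Hpa /eqP Hpl Hpn].
  have Hpath : path (adj G) v (p ++ q) by rewrite cat_path Hpa Hpl.
  have Hl2 : last v (p ++ q) = last u q by rewrite last_cat Hpl.
  have Huniq : uniq (v :: p ++ q).
    rewrite /= mem_cat negb_or cat_uniq Hvq andbT.
    move: Hpu => /= /andP [-> ->] /=; rewrite Huq' andbT.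
    apply/hasPn => z Hzq; apply/negP => Hzp.
    have Hqe : path e u q by apply: adj_e => //=; rewrite Huv /=; apply/allP => t Ht; apply/negP => /eqP Htv; rewrite -Htv Ht in Hvq.
    have Hc1 := Hpc z Hzp.
    have Hc2 : connect e u z by apply: (path_connect Hqe); rewrite inE Hzq orbT.
    by have Hzu := connect_antisym Hc2 Hc1; rewrite Hzu Hzq in Huq.
  have Ha : (last v (p ++ q), v, sg G (last u q) v) \in G by rewrite Hl2; apply: adj_sg.
  have [Hc _ Hs] := cyc_build Hpath Huniq Ha.
  by have := neg_cycle Hc Hs; rewrite ppar_cat Hpl.
move=> H1 H2; move: (key _ H1) (key _ H2).
by case: (ppar G v p1); case: (ppar G v p2); case: (ppar G u q); case: (sg G (last u q) v).
Qed.

Lemma K2 j p b : Dpath j p -> (j, v, b) \in G -> b = ppar G v p.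
Proof.
move=> Hp Hb; have [Hu _] := Dpath_prop Hp.
move: (Hp) => /and3P [Hpa /eqP Hpl _].
have Ha : (last v p, v, b) \in G by rewrite Hpl.
have [Hc _ Hs] := cyc_build Hpa Hu Ha.
by have := neg_cycle Hc Hs; case: b {Hb Ha Hc Hs}; case: (ppar G v p).
Qed.

Lemma no_double j i s : (j, i, s) \in G -> s = sg G j i.
Proof.
rewrite /sg; case: s => [->//|Hf].
case Ht: ((j, i, true) \in G) => //.
case/connectP: (Hsc i j) => q0 Hq0 Hl0.
case/shortenP: Hq0 Hl0 => q Hq Hqu _ Hl.
have H1 : (last i q, i, true) \in G by rewrite -Hl.
have H2 : (last i q, i, false) \in G by rewrite -Hl.
have [Hc1 _ Hs1] := cyc_build Hq Hqu H1.
have [Hc2 _ Hs2] := cyc_build Hq Hqu H2.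
have := neg_cycle Hc1 Hs1; have := neg_cycle Hc2 Hs2.
by case: (ppar G i q).
Qed.

Definition sig (u : 'I_n) : bool := ppar G v (xchoose (Dpath_ex u)).

Lemma sig_path u p : Dpath u p -> sig u = ppar G v p.
Proof. move=> Hp; apply: K1 Hp; exact: xchooseP. Qed.

Lemma sig_v : sig v = false.
Proof. by rewrite (sig_path (p := [::])) // /Dpath /= eqxx. Qed.

Lemma F2 j i s : (j, i, s) \in G -> s = if i == v then sig j else (sig j == sig i).
Proof.
move=> Hs; have [pj Hpj] := Dpath_ex j.
have [Hiv|Hiv] := eqVneq i v.
  by rewrite (sig_path Hpj); apply: K2 Hpj _; rewrite -Hiv.
have Hpi : Dpath i (rcons pj i).
  move: (Hpj) => /and3P [Hpa /eqP Hpl Hpn].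
  by rewrite /Dpath rcons_path Hpa Hpl (arc_adj Hs) last_rcons eqxx all_rcons Hiv Hpn.
rewrite (sig_path Hpj) (sig_path Hpi) -cats1 ppar_cat /=.
move: (Hpj) => /and3P [_ /eqP -> _]; rewrite -(no_double Hs).
by case: s {Hs Hpi}; case: (ppar G v pj).
Qed.

Definition rk (u : 'I_n) : nat := #|[set z | connect e z u]|.

Lemma rk_lt x y : e x y -> rk x < rk y.
Proof.
move=> Hxy; apply: proper_card; apply/properP; split.
  apply/subsetP => z; rewrite !inE => Hz; exact: connect_trans Hz (connect1 Hxy).
exists y; rewrite !inE ?connect0 //; apply/negP => H; exact: NoDcyc Hxy H.
Qed.

Definition leR : rel 'I_n := fun a b => rk a <= rk b.

Lemma leR_trans : transitive leR.
Proof. move=> a b c; exact: leq_trans. Qed.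

Lemma sorted_before L L1 i L2 j : sorted leR L -> L = L1 ++ i :: L2 -> j \in L ->
  rk j < rk i -> j \in L1.
Proof.
move=> Hs HL; rewrite HL mem_cat inE => /orP [//|/orP [/eqP ->|Hj]]; first by rewrite ltnn.
have Hsub : subseq (i :: L2) L by rewrite HL suffix_subseq.
move: (subseq_sorted leR_trans Hsub Hs) => /= /(order_path_min leR_trans) /allP /(_ j Hj); rewrite /leR => H1 H2.
by have := leq_ltn_trans H1 H2; rewrite ltnn.
Qed.

Definition ustep : rel 'I_n :=
  fun x y => adj G x y && [forall j, [forall s, ((j, y, s) \in G) ==> (j == x)]].

Lemma ustep_in x y j s : ustep x y -> (j, y, s) \in G -> j = x.
Proof.
by case/andP => _ /forallP /(_ j) /forallP /(_ s) /implyP H /H /eqP.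
Qed.

Lemma cyc_cover c : c != [::] -> uniq c -> cycle ustep c -> is_cycle_digraph G.
Proof.
move=> Hne Hu Hc.
have Hprev : forall y, y \in c -> ustep (prev c y) y := fun y Hy => prev_cycle Hc Hy.
have Hall : forall u, u \in c.
  have [y0 Hy0] : exists y0, y0 \in c by case: (c) Hne => // y0 c' _; exists y0; exact: mem_head.
  move=> u.
  case/connectP: (Hsc u y0) => p Hp Hl.
  elim: p u Hp Hl => [|z p IH] u /=; first by move=> _ <-.
  case/andP => Huz Hp Hl; have Hz := IH z Hp Hl.
  case/existsP: Huz => s Hs.
  by rewrite (ustep_in (Hprev z Hz) Hs) mem_prev.
pose F := fun y => (prev c y, y, sg G (prev c y) y).
have Hsrc : map (@arc_src n) (map F c) = map (prev c) c by rewrite -map_comp.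
exists (map F c); split.
- apply/and4P; split.
  + by case: (c) Hne.
  + apply/allP => a /mapP [y Hy ->]; apply: adj_sg; by case/andP: (Hprev y Hy).
  + rewrite cycle_map; apply: sub_cycle (cycle_next Hu) => x y /eqP <-.
    by rewrite /relpre /F /arc_tgt /arc_src /= prev_next // eqxx.
  + rewrite Hsrc map_inj_in_uniq // => a b _ _ H.
    by rewrite -(next_prev Hu a) H next_prev.
- move=> a; apply/idP/idP.
  + case: a => [[j i] s] H; have Hi := Hall i.
    have Hj := ustep_in (Hprev i Hi) H.
    rewrite (no_double H) Hj; apply/mapP; by exists i.
  + case/mapP => y Hy ->; apply: adj_sg; by case/andP: (Hprev y Hy).
- move=> u; rewrite Hsrc; apply/mapP; exists (next c u); first by rewrite mem_next.
  by rewrite prev_next.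
Qed.

Hypothesis Hin : forall i, exists j, adj G j i.
Hypothesis Hncyc : ~ is_cycle_digraph G.

Lemma chain_ex : exists w p q Zs, [/\ adj G p w, adj G q w & p != q] /\ [/\ path ustep w Zs,
  last w Zs = v, uniq (w :: Zs) & forall t, t \in w :: Zs -> t = v \/ connect e w t].
Proof.
suff H : forall k z Zs, path ustep z Zs -> last z Zs = v -> uniq (z :: Zs) ->
   (forall t, t \in z :: Zs -> t = v \/ connect e z t) -> n - size Zs <= k ->
   exists w p q Zs, [/\ adj G p w, adj G q w & p != q] /\ [/\ path ustep w Zs,
     last w Zs = v, uniq (w :: Zs) & forall t, t \in w :: Zs -> t = v \/ connect e w t].
  apply: (H n v [::]) => //; last by rewrite subn0.
  by move=> t; rewrite inE => /eqP ->; left.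
elim=> [|k IH] z Zs Hp Hl Hu Hc Hk.
all: have Hs : size (z :: Zs) <= n by rewrite -[X in _ <= X](size_enum_ord n); apply: uniq_leq_size => // t _; rewrite mem_enum.
  by move: Hs Hk => /=; lia.
have [j Hj] := Hin z.
case: (boolP [exists j', [exists s', ((j', z, s') \in G) && (j' != j)]]).
  move/existsP => [j' /existsP [s' /andP [Hs' Hne]]].
  by exists z, j', j, Zs; split; split => //; exact: arc_adj Hs'.
move=> Hno.
have Hust : ustep j z.
  rewrite /ustep Hj /=; apply/forallP => j'; apply/forallP => s'; apply/implyP => H.
  apply/negPn/negP => Hne; apply: (negP Hno); apply/existsP; exists j'; apply/existsP; exists s'.
  by rewrite H.
case: (boolP (j \in z :: Zs)) => Hjin.
  exfalso; apply: Hncyc.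
  move: Hp Hu; case/splitPl: Hjin => p1 p2 Hl1 Hp Hu.
  apply: (@cyc_cover (z :: p1)) => //.
    by apply: (subseq_uniq _ Hu); rewrite -cat_cons prefix_subseq.
  rewrite /= rcons_path Hl1 Hust andbT; by move: Hp; rewrite cat_path => /andP [-> _].
have Hvin : v \in z :: Zs by rewrite -Hl mem_last.
have Hjv : j != v by apply/negP => /eqP Hjv; rewrite Hjv Hvin in Hjin.
apply: (IH j (z :: Zs)).
- by rewrite /= Hust Hp.
- by [].
- by rewrite cons_uniq Hjin Hu.
- move=> t; rewrite inE => /orP [/eqP ->|Ht]; first by right; exact: connect0.
  case: (Hc t Ht) => [->|Hzt]; first by left.
  case: (eqVneq z v) => [Hzv|Hzv].
    by left; apply: connect_from_v; rewrite -Hzv.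
  by right; apply: connect_trans (connect1 (_ : e j z)) Hzt; rewrite /e Hj Hjv Hzv.
- by move: Hk => /=; lia.
Qed.

End Graph.

Section Sem.
Variables (n : nat) (G : signed_digraph n) (f : BN n).
Hypothesis Hf : forall i, is_conjunction_at G f i \/ is_disjunction_at G f i.

Definition Cs (S : state n -> state n) u := forall x y, S x u = S y u.
Definition stp (S : state n -> state n) i := fun x => upd f i (S x).
Definition run (S : state n -> state n) L := fun x => foldl (fun y i => upd f i y) (S x) L.

Lemma run_cons S i L : run S (i :: L) = run (stp S i) L.
Proof. by []. Qed.

Lemma stp_other S i u x : u != i -> stp S i x u = S x u.
Proof. by move=> H; rewrite /stp /upd /setc ffunE (negbTE H). Qed.

Lemma stp_self S i x : stp S i x i = f (S x) i.
Proof. by rewrite /stp /upd /setc ffunE eqxx. Qed.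

Lemma run_other S L u x : u \notin L -> run S L x u = S x u.
Proof.
elim: L S => [|i L IH] S //; rewrite run_cons inE negb_or => /andP [Hne HL].
by rewrite IH // stp_other.
Qed.

Lemma fconst (b b' : state n) i : (forall j s, (j, i, s) \in G -> b j = b' j) -> f b i = f b' i.
Proof.
move=> H.
have E1 : forall j, (((j, i, true) \in G) ==> b j) && (((j, i, false) \in G) ==> ~~ b j)
                  = (((j, i, true) \in G) ==> b' j) && (((j, i, false) \in G) ==> ~~ b' j).
  move=> j; case Et: ((j, i, true) \in G); case Ef: ((j, i, false) \in G);
  by rewrite /= ?(H _ _ Et) ?(H _ _ Ef).
have E2 : forall j, (((j, i, true) \in G) ==> ~~ b j) && (((j, i, false) \in G) ==> b j)
                  = (((j, i, true) \in G) ==> ~~ b' j) && (((j, i, false) \in G) ==> b' j).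
  move=> j; case Et: ((j, i, true) \in G); case Ef: ((j, i, false) \in G);
  by rewrite /= ?(H _ _ Et) ?(H _ _ Ef).
case: (Hf i) => Hc; rewrite !Hc; first exact: eq_forallb.
by congr (~~ _); exact: eq_forallb.
Qed.

Lemma conj_false (c : state n) i r sr : (r, i, sr) \in G -> (c r == sr) = false ->
  [forall j, (((j, i, true) \in G) ==> c j) && (((j, i, false) \in G) ==> ~~ c j)] = false.
Proof.
move=> Hr Hl; apply/negbTE/negP => /forallP /(_ r).
by case: sr Hr Hl => -> /=; case: (c r); rewrite ?andbF.
Qed.

Lemma disj_false (c : state n) i r sr : (r, i, sr) \in G -> (c r == sr) = true ->
  [forall j, (((j, i, true) \in G) ==> ~~ c j) && (((j, i, false) \in G) ==> c j)] = false.
Proof.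
move=> Hr Hl; apply/negbTE/negP => /forallP /(_ r).
by case: sr Hr Hl => -> /=; case: (c r); rewrite ?andbF.
Qed.

Lemma conj_true (c : state n) i : (forall j s, (j, i, s) \in G -> (c j == s) = true) ->
  [forall j, (((j, i, true) \in G) ==> c j) && (((j, i, false) \in G) ==> ~~ c j)] = true.
Proof.
move=> H; apply/forallP => j; apply/andP; split; apply/implyP => Hj;
by have := H _ _ Hj; case: (c j).
Qed.

Lemma disj_true (c : state n) i : (forall j s, (j, i, s) \in G -> (c j == s) = false) ->
  [forall j, (((j, i, true) \in G) ==> ~~ c j) && (((j, i, false) \in G) ==> c j)] = true.
Proof.
move=> H; apply/forallP => j; apply/andP; split; apply/implyP => Hj;
by have := H _ _ Hj; case: (c j).
Qed.

Lemma fval (b : state n) i L : (exists j, adj G j i) ->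
  (forall j s, (j, i, s) \in G -> (b j == s) = L) -> f b i = L.
Proof.
move=> [j0 /existsP [s0 H0]] H.
case: (Hf i) => Hc; rewrite Hc; case: L H => H.
- by apply: conj_true.
- exact: conj_false H0 (H _ _ H0).
- by rewrite (disj_false H0 (H _ _ H0)).
- by rewrite disj_true.
Qed.

Lemma fmix (b b' : state n) i p q sp sq : (p, i, sp) \in G -> (q, i, sq) \in G ->
  (b p == sp) != (b q == sq) -> (b' p == sp) != (b' q == sq) -> f b i = f b' i.
Proof.
move=> Hp Hq.
have key : forall c : state n, (c p == sp) != (c q == sq) ->
  [forall j, (((j, i, true) \in G) ==> c j) && (((j, i, false) \in G) ==> ~~ c j)] = false /\
  [forall j, (((j, i, true) \in G) ==> ~~ c j) && (((j, i, false) \in G) ==> c j)] = false.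
  move=> c; case Ep: (c p == sp); case Eq: (c q == sq) => // _.
    by split; [exact: conj_false Hq Eq | exact: disj_false Hp Ep].
  by split; [exact: conj_false Hp Ep | exact: disj_false Hq Eq].
move=> /key [H1 H2] /key [H3 H4].
by case: (Hf i) => Hc; rewrite !Hc ?H1 ?H2 ?H3 ?H4.
Qed.

Lemma cs_step S i : (forall j s, (j, i, s) \in G -> Cs S j) -> Cs (stp S i) i.
Proof. by move=> H x y; rewrite !stp_self; apply: fconst => j s Hj; exact: H Hj x y. Qed.

Lemma run_cs S L (B : 'I_n -> Prop) : (forall u, B u -> Cs S u) ->
  (forall L1 i L2 j s, L = L1 ++ i :: L2 -> (j, i, s) \in G -> B j \/ j \in L1) ->
  forall u, B u \/ u \in L -> Cs (run S L) u.
Proof.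
elim: L S B => [|i L IH] S B HB Hs u Hu.
  by case: Hu => // /HB.
rewrite run_cons; apply: (IH _ (fun u => B u \/ u = i)).
- move=> t Ht; have [->|Hne] := eqVneq t i.
    apply: cs_step => j s Hj; case: (Hs [::] i L j s erefl Hj) => // /HB //.
  case: Ht => [Ht|Hti]; last by rewrite Hti eqxx in Hne.
  by move=> x y; rewrite !stp_other //; exact: HB.
- move=> L1 i' L2 j s HL Hj; case: (Hs (i :: L1) i' L2 j s) => //; first by rewrite HL.
    by left; left.
  rewrite inE => /orP [/eqP ->|]; [by left; right | by right].
- by case: Hu => [Hu|]; [left; left | rewrite inE => /orP [/eqP ->|]; [left; right| right]].
Qed.

Variables (v : 'I_n) (sig : 'I_n -> bool).
Hypothesis Hsv : sig v = false.
Hypothesis HF2 : forall j i s, (j, i, s) \in G -> s = if i == v then sig j else (sig j == sig i).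
Hypothesis Hin : forall i, exists j, adj G j i.

Definition Ph (S : state n -> state n) u k := forall x, S x u = x v (+) sig u (+) k.

Lemma lit S j i s k x : (j, i, s) \in G -> Ph S j k ->
  (S x j == s) = x v (+) sig i (+) k (+) (i == v).
Proof.
move=> H Hp; rewrite Hp (HF2 H); clear Hp H.
have [->|Hne] := eqVneq i v; rewrite ?eqxx ?(negbTE Hne) ?Hsv /=.
  by case: (x v); case: (sig j); case: k.
by case: (x v); case: (sig j); case: k; case: (sig i).
Qed.

Lemma ph_step S i k : (forall j s, (j, i, s) \in G -> Ph S j k) -> Ph (stp S i) i (k (+) (i == v)).
Proof.
move=> H x; rewrite stp_self (@fval _ _ (x v (+) sig i (+) k (+) (i == v))) ?Hin ?addbA //.
move=> j s Hj; exact: lit Hj (H _ _ Hj).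
Qed.

Lemma mix_step S i p q sp sq kp kq : (p, i, sp) \in G -> (q, i, sq) \in G ->
  Ph S p kp -> Ph S q kq -> kp != kq -> Cs (stp S i) i.
Proof.
move=> Hp Hq Pp Pq Hk x y; rewrite !stp_self; apply: (fmix Hp Hq);
rewrite (lit _ Hp Pp) (lit _ Hq Pq); clear Pp Pq; move: (x v) (y v) (sig i) (i == v) => a b c d;
by case: a; case: b; case: c; case: d; case: kp Hk; case: kq.
Qed.

Lemma run_ph S L (B : 'I_n -> Prop) k : (forall u, B u -> Ph S u k) ->
  (forall i, i \in L -> i != v) -> uniq L -> (forall i, i \in L -> ~ B i) ->
  (forall L1 i L2 j s, L = L1 ++ i :: L2 -> (j, i, s) \in G -> B j \/ j \in L1) ->
  forall u, B u \/ u \in L -> Ph (run S L) u k.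
Proof.
elim: L S B => [|i L IH] S B HB Hv Hu HnB Hs u Hu'.
  by case: Hu' => // /HB.
move: Hu; rewrite cons_uniq => /andP [HiL Hu].
rewrite run_cons; apply: (IH _ (fun u => B u \/ u = i)).
- move=> t Ht; have [->|Hne] := eqVneq t i.
    have := @ph_step S i k; rewrite (negbTE (Hv i (mem_head _ _))) addbF; apply.
    move=> j s Hj; case: (Hs [::] i L j s erefl Hj) => // /HB //.
  case: Ht => [Ht|Hti]; last by rewrite Hti eqxx in Hne.
  by move=> x; rewrite stp_other //; exact: HB.
- by move=> t Ht; apply: Hv; rewrite inE Ht orbT.
- exact: Hu.
- move=> t Ht [Bt|Eti]; first by apply: (HnB t); rewrite // inE Ht orbT.
  by rewrite -Eti Ht in HiL.
- move=> L1 i' L2 j s HL Hj; case: (Hs (i :: L1) i' L2 j s) => //; first by rewrite HL.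
    by left; left.
  rewrite inE => /orP [/eqP ->|]; [by left; right | by right].
- by case: Hu' => [Hu'|]; [left; left | rewrite inE => /orP [/eqP ->|]; [left; right| right]].
Qed.

End Sem.

Lemma arith3 (a b n : nat) : a < n -> b <= n -> a + (b + a).+1 + (3 * n - 1 - (a + (b + a).+1)) = 3 * n - 1.
Proof. lia. Qed.

Lemma arith_pos (n : nat) : 0 < n -> 0 < 3 * n - 1.
Proof. lia. Qed.

Theorem proposition5 (n : nat) (G : signed_digraph n) :
  strongly_connected G -> no_positive_cycle G -> ~ is_cycle_digraph G ->
  tau G <= 1 ->
  exists w : seq 'I_n, size w = 3 * n - 1 /\
    forall f : BN n, and_or_net G f -> synchronizes w f.
Proof.
move=> Hsc Hnp Hnc Htau.
case: (posnP n) => [n0|npos].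
  exists [::]; split; first by rewrite n0.
  move=> f _; exists [ffun i => false] => x; apply/ffunP => i.
  exfalso; move: (ltn_ord i); move: (nat_of_ord i) => m; by rewrite n0.
have [v Hfv] : exists v, fvs G [set v].
  move: Htau; rewrite /tau; case: ex_minnP => k Hk _ Hle.
  move: Hk; rewrite /tau_pred; case: excluded_middle_informative => // [[X [HX HfX]]] _.
  case: k HX Hle => [|[|//]] HX _.
    exists (Ordinal npos) => c Hc; have := HfX c Hc.
    by rewrite (cards0_eq HX) => /hasP [a _]; rewrite in_set0.
  have /cards1P [y Hy] : #|X| == 1 by rewrite HX.
  by exists y; rewrite -Hy.
case: (boolP [forall i, [exists j, adj G j i]]) => Hall; last first.
  move/forallPn: Hall => [u /existsPn Hu].
  have Honly : forall t, t = u.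
    move=> t; apply/eqP; apply/negPn/negP => Hne.
    have [j Hj] := connect_last_step (Hsc t u) Hne.
    by have := Hu j; rewrite Hj.
  exists (nseq (3 * n - 1) u); split; first by rewrite size_nseq.
  move=> f [_ Hf]; exists (upd_word f (nseq (3 * n - 1) u) [ffun _ => false]) => x.
  apply/ffunP => t; rewrite (Honly t).
  have Hcs := @run_cs _ G f Hf (fun x => x) (nseq (3 * n - 1) u) (fun _ => False)
     (fun _ F => match F with end).
  apply: Hcs.
    move=> L1 i L2 j s HL Hj; exfalso; have := Hu j.
    by rewrite (Honly i) in Hj; rewrite (arc_adj Hj).
  right; rewrite mem_nseq eqxx andbT; exact: arith_pos.
have Hin : forall i, exists j, adj G j i by move=> i; exact/existsP/(forallP Hall i).
have [w [p0 [q0 [Zs [[Hp0 Hq0 Hpq0] [HZp HZl HZu HZc]]]]]] := chain_ex v Hsc Hnp Hin Hnc.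
pose ee := e G v.
have [p [q [Hp Hq Hqv Hpq]]] : exists p q, [/\ adj G p w, adj G q w, q != v & (p == v) || ~~ connect ee q p].
  case: (eqVneq q0 v) => Hq0v.
    exists q0, p0; split => //; last by rewrite Hq0v eqxx.
    by rewrite -Hq0v.
  case: (eqVneq p0 v) => Hp0v; first by exists p0, q0; split => //; rewrite Hp0v eqxx.
  case: (boolP (connect ee q0 p0)) => Hc; last by exists p0, q0; split => //; rewrite Hc orbT.
  exists q0, p0; split => //; apply/orP; right; apply/negP => Hc'.
  by have := connect_antisym Hfv Hc Hc'; move=> E; rewrite E eqxx in Hpq0.
pose T := sort (leR G v) [seq u <- enum 'I_n | u != v].
pose A := [seq a <- T | (p != v) && connect ee a p].
pose W0 := T ++ v :: A ++ w :: Zs ++ T.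
have HT_mem : forall u, (u \in T) = (u != v) by move=> u; rewrite mem_sort mem_filter mem_enum andbT.
have HT_uniq : uniq T by rewrite sort_uniq filter_uniq // enum_uniq.
have HT_sorted : sorted (leR G v) T by apply: sort_sorted => a b; exact: leq_total.
have HA_mem : forall u, (u \in A) = [&& u != v, p != v & connect ee u p].
  by move=> u; rewrite mem_filter HT_mem andbC.
have HA_sorted : sorted (leR G v) A by apply: sorted_filter => //; exact: leR_trans.
have HA_uniq : uniq A by rewrite filter_uniq.
have sizeI : forall s : seq 'I_n, uniq s -> size s <= n.
  move=> s Hs; rewrite -[X in _ <= X](size_enum_ord n); apply: uniq_leq_size => // t _; by rewrite mem_enum.
have HsT : size T < n.
  have Hu : uniq (v :: T) by rewrite /= HT_mem eqxx HT_uniq.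
  exact: sizeI _ Hu.
have HsAZ : size (A ++ w :: Zs) <= n.
  apply: sizeI; rewrite cat_uniq HA_uniq HZu andbT; apply/hasPn => t Ht.
  rewrite HA_mem; apply/negP => /and3P [Htv Hpv Htp].
  case: (HZc t Ht) => [Etv|Hwt]; first by rewrite Etv eqxx in Htv.
  have Hwv : w != v by apply/negP => /eqP Ewv; rewrite Ewv in Hwt; rewrite (connect_from_v Hwt) eqxx in Htv.
  have Hpw : ee p w by rewrite /ee /e Hp Hpv Hwv.
  exact: (NoDcyc Hfv Hpw (connect_trans Hwt Htp)).
exists (W0 ++ nseq (3 * n - 1 - size W0) v); split.
  have E : size W0 = size T + (size (A ++ w :: Zs) + size T).+1.
    rewrite /W0 size_cat; congr (_ + _).
    have -> : A ++ w :: Zs ++ T = (A ++ w :: Zs) ++ T by rewrite -catA.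
    by rewrite [size (v :: _)]/= size_cat.
  rewrite size_cat size_nseq E.
  exact: arith3.
move=> f [_ Hf].
pose sg0 := sig v Hsc.
have Hsv : sg0 v = false := sig_v Hsc Hnp Hfv.
have HF2 : forall j i s, (j, i, s) \in G -> s = if i == v then sg0 j else (sg0 j == sg0 i).
  move=> j i s Hj; rewrite /sg0; exact: (F2 Hsc Hnp Hfv Hj).
have HT_split : forall L1 i L2 j s, T = L1 ++ i :: L2 -> (j, i, s) \in G -> j = v \/ j \in L1.
  move=> L1 i L2 j s HL Hj; case: (eqVneq j v) => Hjv; first by left.
  right; have Hi : i \in T by rewrite HL mem_cat mem_head orbT.
  have Hji : ee j i by rewrite /ee /e (arc_adj Hj) Hjv -HT_mem Hi.
  by apply: (sorted_before HT_sorted HL _ (rk_lt Hfv Hji)); rewrite HT_mem.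
have HA_split : forall L1 i L2 j s, A = L1 ++ i :: L2 -> (j, i, s) \in G -> j = v \/ j \in L1.
  move=> L1 i L2 j s HL Hj; case: (eqVneq j v) => Hjv; first by left.
  right; have Hi : i \in A by rewrite HL mem_cat mem_head orbT.
  move: (Hi); rewrite HA_mem => /and3P [Hiv Hpv Hip].
  have Hji : ee j i by rewrite /ee /e (arc_adj Hj) Hjv Hiv.
  apply: (sorted_before HA_sorted HL _ (rk_lt Hfv Hji)).
  by rewrite HA_mem Hjv Hpv (connect_trans (connect1 Hji) Hip).
pose S1 := run f (fun x => x) T.
have P1 : forall u, Ph v sg0 S1 u false.
  move=> u; apply: (run_ph Hf Hsv HF2 Hin (B := fun u => u = v)).
  - by move=> t -> x /=; rewrite Hsv; case: (x v).
  - by move=> i; rewrite HT_mem.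
  - exact: HT_uniq.
  - by move=> i; rewrite HT_mem => H E; rewrite E eqxx in H.
  - exact: HT_split.
  - by case: (eqVneq u v) => H; [left | right; rewrite HT_mem].
pose S2 := stp f S1 v.
have P2v : Ph v sg0 S2 v true.
  have := @ph_step _ G f Hf v sg0 Hsv HF2 Hin S1 v false; rewrite eqxx; apply.
  by move=> j s _; exact: P1.
have P2 : forall u, u != v -> Ph v sg0 S2 u false.
  by move=> u Hu x; rewrite /S2 stp_other //; exact: P1.
pose S3 := run f S2 A.
have P3 : forall u, u = v \/ u \in A -> Ph v sg0 S3 u true.
  move=> u Hu; apply: (run_ph Hf Hsv HF2 Hin (B := fun u => u = v)) => //.
  - by move=> t ->.
  - by move=> i; rewrite HA_mem => /andP [].
  - by move=> i; rewrite HA_mem => /andP [H _] E; rewrite E eqxx in H.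
have P3' : forall u, u != v -> u \notin A -> Ph v sg0 S3 u false.
  by move=> u Hu HuA x; rewrite /S3 run_other //; exact: P2.
pose S4 := stp f S3 w.
have C4 : Cs S4 w.
  have Hpp : Ph v sg0 S3 p true.
    apply: P3; case: (eqVneq p v) => Hpv; [by left | by right; rewrite HA_mem Hpv connect0].
  have Hqq : Ph v sg0 S3 q false.
    apply: P3' => //; rewrite HA_mem; apply/negP => /and3P [_ Hpv' Hqp].
    by move: Hpq; rewrite (negbTE Hpv') Hqp.
  exact: (mix_step Hf Hsv HF2 (adj_sg Hp) (adj_sg Hq) Hpp Hqq isT).
pose S5 := run f S4 Zs.
have C5 : Cs S5 v.
  apply: (run_cs Hf (B := fun u => u = w)).
  - by move=> t ->.
  - move=> L1 i L2 j s HL Hj; move: HZp; rewrite HL cat_path => /andP [_ /= /andP [Hu _]].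
    rewrite (ustep_in Hu Hj); have := mem_last w L1; rewrite inE => /orP [/eqP ->|H]; [by left | by right].
  - have := mem_last w Zs; rewrite HZl inE => /orP [/eqP ->|H]; [by left | by right].
pose S6 := run f S5 T.
have C6 : forall u, Cs S6 u.
  move=> u; apply: (run_cs Hf (B := fun u => u = v)).
  - by move=> t ->.
  - exact: HT_split.
  - by case: (eqVneq u v) => H; [left | right; rewrite HT_mem].
pose S7 := run f S6 (nseq (3 * n - 1 - size W0) v).
have C7 : forall u, Cs S7 u.
  move=> u; apply: (run_cs Hf (B := fun _ => True)) => //.
  - by move=> L1 i L2 j s _ _; left.
  - by left.
exists (S7 [ffun _ => false]) => x.
have -> : upd_word f (W0 ++ nseq (3 * n - 1 - size W0) v) x = S7 x.
  by rewrite /upd_word /W0 !foldl_cat /= !foldl_cat /= !foldl_cat.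
apply/ffunP => u; exact: C7.
Qed.
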